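(* For a Hirzebruch-Jung continued fraction $v=[n_1,\dots,n_l]$ (all $n_j\ge 2$ integers), the integer $q_1+q_l-q$ (computed for $v$ with its own length $l$) is unchanged when $v$ is replaced by $\tau(v)$ or by $r(v)$.
   Context: For numbers $n_1,\dots,n_l$ let $M(-n_1,\dots,-n_l)$ be the $l\times l$ tridiagonal symmetric matrix with diagonal entries $-n_1,\dots,-n_l$, entries $1$ directly above and below the diagonal, and $0$ elsewhere. Put $q=|\det M(-n_1,\dots,-n_l)|$, $q_1=|\det M(-n_2,\dots,-n_l)|$, $q_l=|\det M(-n_1,\dots,-n_{l-1})|$, with the convention that the determinant of the empty matrix is $1$. The continued fraction is $[n_1,\dots,n_l]=n_1-1/(n_2-1/(\cdots-1/n_l))$. The $\tau$-operation is $\tau([n_1,\dots,n_l])=[2,n_1,\dots,n_{l-1},n_l+1]$ (length $l+1$), and the reverse operation is $r([n_1,\dots,n_l])=[n_l,\dots,n_1]$. *)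

(* Defs.v *)
From mathcomp Require Import all_boot all_order all_algebra.
Set Implicit Arguments. Unset Strict Implicit. Unset Printing Implicit Defensive.
Import GRing.Theory Num.Theory.
Local Open Scope ring_scope.

Definition HJmx (s : seq nat) : 'M[int]_(size s) :=
  \matrix_(i, j) (if i == j then - (nth 0%N s i)%:Z
                  else if (i.+1 == j :> nat) || (j.+1 == i :> nat) then 1 else 0).

(* |det M(-n_1,...,-n_l)|; the empty matrix has determinant 1 (\det of 'M_0). *)
Definition HJdet (s : seq nat) : int := `|\det (HJmx s)|.

Definition HJq (v : seq nat) : int := HJdet v.
Definition HJq1 (v : seq nat) : int := HJdet (behead v).
Definition HJql (v : seq nat) : int := HJdet (take (size v).-1 v).

Definition HJinv (v : seq nat) : int := HJq1 v + HJql v - HJq v.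

Definition HJtau (v : seq nat) : seq nat :=
  2%N :: (take (size v).-1 v ++ [:: (last 0%N v).+1]).

Definition HJr (v : seq nat) : seq nat := rev v.

(* Main.v *)
Require Import Defs.
From mathcomp Require Import all_boot all_order all_algebra.
From mathcomp Require Import ring lra zify.
Set Implicit Arguments. Unset Strict Implicit. Unset Printing Implicit Defensive.
Import Order.TTheory GRing.Theory Num.Theory.
Local Open Scope ring_scope.

Lemma det_nil : \det (HJmx [::]) = 1.
Proof. by rewrite det_mx00. Qed.

Lemma det_one a : \det (HJmx [:: a]) = - a%:Z.
Proof. by rewrite [HJmx _]mx11_scalar det_scalar1 mxE. Qed.

Lemma det_cons2 a b s :
  \det (HJmx [:: a, b & s]) = - a%:Z * \det (HJmx (b :: s)) - \det (HJmx s).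
Proof.
rewrite (expand_det_row _ ord0) big_ord_recl big_ord_recl big1; last first.
  move=> j _; rewrite mxE /=.
  by rewrite mul0r.
rewrite addr0.
have -> : cofactor (HJmx [:: a, b & s]) ord0 ord0 = \det (HJmx (b :: s)).
  rewrite /cofactor expr0 mul1r; congr (\det _).
  apply/matrixP => i j; rewrite !mxE /=.
  by [].
rewrite !mxE /= mul1r; congr (_ + _).
rewrite /cofactor /= expr1 mulN1r; congr (- _).
rewrite (expand_det_col _ ord0) big_ord_recl big1; last first.
  move=> j _; rewrite !mxE /=.
  by rewrite mul0r.
rewrite addr0 !mxE /= mul1r /cofactor expr0 mul1r; congr (\det _).
apply/matrixP => i j; rewrite !mxE /=.
rewrite -[lift _ _ == _]val_eqE /= /bump /= !add1n !eqSS add0n. by []. 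
Qed.


Fixpoint P (s : seq nat) : int :=
  match s with
  | [::] => 1
  | [:: a] => a%:Z
  | a :: ((b :: s') as t) => a%:Z * P t - P s'
  end.

Lemma detP s : \det (HJmx s) = (-1) ^+ size s * P s.
Proof.
suff H : \det (HJmx s) = (-1) ^+ size s * P s /\
   forall a, \det (HJmx (a :: s)) = (-1) ^+ size (a :: s) * P (a :: s) by case: H.
elim: s => [|b s [IH1 IH2]].
  split; first by rewrite det_nil expr0 mul1r.
  by move=> a; rewrite det_one /= expr1 mulN1r.
split; first exact: IH2.
move=> a; rewrite det_cons2 IH2 IH1 /= !exprS. ring.
Qed.

Lemma PE a b t : P [:: a, b & t] = a%:Z * P (b :: t) - P t.
Proof. by []. Qed.

Lemma Ppos s : all (fun n => 2 <= n)%N s -> 0 < P (behead s) <= P s.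
Proof.
elim: s => [|a [|b t] IH] //.
  by rewrite /= andbT => ha; rewrite lez_nat ltnW.
move=> /andP[ha hbt]; move: (IH hbt) => /andP[h1 h2].
rewrite [behead _]/= in h1 h2.
rewrite [behead _]/= PE.
have h3 : 2%:Z * P (b :: t) <= a%:Z * P (b :: t).
  by rewrite ler_wpM2r // (le_trans (ltW h1) h2).
rewrite (lt_le_trans h1 h2) andTb.
move: h2 h3; set X := P (b :: t); set Y := a%:Z * X; move=> h2 h3; lra.
Qed.

Lemma Pr s x y : P (s ++ [:: x; y]) = y%:Z * P (s ++ [:: x]) - P s.
Proof.
suff H : (forall x y, P (s ++ [:: x; y]) = y%:Z * P (s ++ [:: x]) - P s) /\
   forall a x y, P ((a :: s) ++ [:: x; y]) = y%:Z * P ((a :: s) ++ [:: x]) - P (a :: s)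
  by case: H.
elim: s {x y} => [|b s [IH1 IH2]].
  split; first by move=> x y /=; ring.
  by move=> a x y /=; ring.
split; first exact: IH2.
move=> a x y.
rewrite !cat_cons !PE -!cat_cons IH2 IH1. ring.
Qed.

Lemma Prev s : P (rev s) = P s.
Proof.
suff H : P (rev s) = P s /\ forall a, P (rev (a :: s)) = P (a :: s) by case: H.
elim: s => [|b s [IH1 IH2]]; first by split.
split; first exact: IH2.
move=> a; rewrite rev_cons rev_cons -!cats1 -catA cat1s Pr.
rewrite cats1 -rev_cons IH2 IH1 PE //.
Qed.

Lemma HJdetP s : all (fun n => 2 <= n)%N s -> HJdet s = P s.
Proof.
move=> /Ppos /andP[h1 h2].
rewrite /HJdet detP normrM normrX normrN1 expr1n mul1r gtr0_norm //.
exact: lt_le_trans h1 h2.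
Qed.

Lemma HJinv_rcons s x :
  HJinv (rcons s x) = HJdet (behead (rcons s x)) + HJdet s - HJdet (rcons s x).
Proof.
by rewrite /HJinv /HJq1 /HJql /HJq size_rcons /= -cats1 take_size_cat.
Qed.

Lemma HJtau_rcons s x : HJtau (rcons s x) = 2%N :: rcons s x.+1.
Proof.
by rewrite /HJtau size_rcons /= -cats1 take_size_cat // last_cat /= cats1.
Qed.

Lemma PrR s x y : P (rcons (rcons s x) y) = y%:Z * P (rcons s x) - P s.
Proof. by rewrite -!cats1 -catA cat1s Pr. Qed.

Lemma beheadR (a : nat) s x : behead (rcons (a :: s) x) = rcons s x.
Proof. by []. Qed.

Lemma HJdet_rev l : all (fun n => 2 <= n)%N l -> HJdet (rev l) = HJdet l.
Proof.
by move=> h; rewrite !HJdetP ?all_rev // Prev.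
Qed.

Theorem lemma2p6 (v : seq nat) :
  (0 < size v)%N -> all (fun n => 2 <= n)%N v ->
  HJinv (HJtau v) = HJinv v /\ HJinv (HJr v) = HJinv v.
Proof.
case/lastP: v => [//|w x] _ hall; split.
  rewrite HJtau_rcons -rcons_cons !HJinv_rcons.
  move: hall; case/lastP: w => [|w' y].
    rewrite /= andbT => hx.
    rewrite !HJdetP /= ?hx //; last first.
    all: try by rewrite ?andbT ltnS ltnW.
    lia.
  rewrite !all_rcons => /and3P[hx hy hw].
  have hx1 : (1 < x.+1)%N by exact: ltnW hx.
  case: w' hw => [|z u] hw.
    rewrite !HJdetP /= ?hx ?hy ?hx1 //.
    rewrite -[x.+1]addn1 PoszD; ring.
  case/andP: hw => hz hu.
  rewrite !beheadR !HJdetP; last first.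
  all: try by rewrite /= ?all_rcons ?hx ?hy ?hx1 ?hz ?hu.
  rewrite !rcons_cons.
  have e1 : P (z :: rcons (rcons u y) x.+1) = x.+1%:Z * P (z :: rcons u y) - P (z :: u)
    := PrR (z :: u) y x.+1.
  have e2 : P (2%N :: z :: rcons (rcons u y) x.+1) =
     x.+1%:Z * P (2%N :: z :: rcons u y) - P (2%N :: z :: u)
    := PrR (2%N :: z :: u) y x.+1.
  have e3 : P (2%N :: z :: rcons u y) = 2%:Z * P (z :: rcons u y) - P (rcons u y) := PE _ _ _.
  have e4 : P (2%N :: z :: u) = 2%:Z * P (z :: u) - P u := PE _ _ _.
  have e5 : P (rcons (rcons u y) x) = x%:Z * P (rcons u y) - P u := PrR u y x.
  have e6 : P (z :: rcons (rcons u y) x) = x%:Z * P (z :: rcons u y) - P (z :: u)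
    := PrR (z :: u) y x.
  rewrite e1 e2 e3 e4 e5 e6 -[x.+1]addn1 PoszD; ring.
rewrite /HJr; case: w hall => [//|z u] hall.
rewrite rev_rcons rev_cons -rcons_cons !HJinv_rcons beheadR.
have h1 : rcons (rev u) z = rev (z :: u) by rewrite rev_cons.
have h2 : x :: rev u = rev (rcons u x) by rewrite rev_rcons.
have h3 : rcons (x :: rev u) z = rev (rcons (z :: u) x) by rewrite rev_rcons rev_cons.
rewrite h3 h1 h2 beheadR !HJdet_rev //.
  by rewrite (addrC (HJdet (z :: u))).
all: by move: hall; rewrite all_rcons /= => /and3P[hx hz hu]; rewrite /= ?all_rcons ?hx ?hz ?hu.
Qed.
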